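(* Let $X$ be a regular Hausdorff $g$-first-countable space. Then $\mathcal{F}(X)$ is $g$-first-countable if and only if $\mathcal{F}(X)$ is sequential.
   Context: $\mathcal{F}(X)$ is the set of nonempty finite subsets of $X$ with the Vietoris topology (base: $\langle U_1,\dots,U_k\rangle=\{A: A\subset\bigcup_i U_i,\ A\cap U_j\neq\emptyset\ \forall j\}$, $U_i$ open in $X$). A space is sequential if every sequentially open set (a set $U$ such that every sequence converging to a point of $U$ is eventually in $U$) is open. A weak base for $Y$ is a cover $\mathcal{P}=\bigcup_{y\in Y}\mathcal{P}_y$ such that: for $U,V\in\mathcal{P}_y$ there is $W\in\mathcal{P}_y$ with $W\subset U\cap V$; each member of $\mathcal{P}_y$ contains $y$ and for each open $U\ni y$ some $P\in\mathcal{P}_y$ has $P\subset U$; and $G\subset Y$ is open whenever for each $y\in G$ some $P\in\mathcal{P}_y$ has $P\subset G$. $Y$ is $g$-first-countable if it has a weak base with each $\mathcal{P}_y$ countable. *)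

(* Defs.v *)
From HB Require Import structures.
From mathcomp Require Import all_boot all_order.
From mathcomp Require Import all_classical topology.
Set Implicit Arguments. Unset Strict Implicit. Unset Printing Implicit Defensive.
Local Open Scope classical_set_scope.

Section Generic.
Variables (T : Type) (op : set (set T)).

Definition seq_conv (u : nat -> T) (x : T) : Prop :=
  forall U : set T, op U -> U x -> exists N, forall n, (N <= n)%N -> U (u n).

Definition seq_open (U : set T) : Prop :=
  forall (u : nat -> T) (x : T), seq_conv u x -> U x ->
    exists N, forall n, (N <= n)%N -> U (u n).

Definition sequential_sp : Prop := forall U : set T, seq_open U -> op U.

Definition weak_base (P : T -> set (set T)) : Prop :=
  [/\ (forall y (U V : set T), P y U -> P y V -> exists2 W, P y W & W `<=` U `&` V),
      (forall y (W : set T), P y W -> W y),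
      (forall y (U : set T), op U -> U y -> exists2 W, P y W & W `<=` U) &
      (forall G : set T, (forall y, G y -> exists2 W, P y W & W `<=` G) -> op G)].

Definition g_first_countable : Prop :=
  exists P : T -> set (set T), weak_base P /\ forall y, countable (P y).
End Generic.

Record finsub (X : Type) := FinSub {
  fs_set : set X;
  fs_fin : finite_set fs_set;
  fs_ne : fs_set !=set0 }.

Definition vietoris_basic (X : Type) (Us : seq (set X)) : set (finsub X) :=
  [set A | (forall x, fs_set A x -> exists2 U, U \in Us & U x) /\
           (forall U, U \in Us -> exists x, fs_set A x /\ U x)].

Definition vietoris_open (X : topologicalType) (G : set (finsub X)) : Prop :=
  forall A, G A -> exists Us : seq (set X),
    [/\ (forall U, U \in Us -> open U), vietoris_basic Us A & vietoris_basic Us `<=` G].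

(* Main.v *)
Require Import Defs.
From HB Require Import structures.
From mathcomp Require Import all_boot all_order.
From mathcomp Require Import all_classical topology.
Set Implicit Arguments. Unset Strict Implicit. Unset Printing Implicit Defensive.
Local Open Scope classical_set_scope.

Lemma enum_countable T (A : set T) : countable A -> A !=set0 ->
  exists e : nat -> T, (forall k, A (e k)) /\ (forall x, A x -> exists k, e k = x).
Proof.
move=> /countable_injP[f finj] [x0 Ax0].
have /choice[e He] : forall k, exists y,
    A y /\ ((exists x, A x /\ f x = k) -> f y = k).
  move=> k.
  case: (pselect (exists x, A x /\ f x = k)) => [[x [Ax fx]]|nx].
    by exists x; split.
  by exists x0; split => // h; case: nx.
exists e; split => [k|x Ax]; first by case: (He k).
exists (f x); case: (He (f x)) => Ae /(_ (ex_intro _ x (conj Ax erefl))) fe.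
by apply: finj; rewrite ?inE.
Qed.

Lemma dec_base T (op : set (set T)) (P : T -> set (set T)) :
  op setT -> weak_base op P -> (forall y, countable (P y)) ->
  exists D : T -> nat -> set T,
   [/\ forall y n, P y (D y n),
       forall y n m, (n <= m)%N -> D y m `<=` D y n &
       forall y W, P y W -> exists k, D y k `<=` W].
Proof.
move=> opT [ax1 ax2 ax3 ax4] cP.
have /choice[e He] : forall y, exists g : nat -> set T,
   (forall k, P y (g k)) /\ (forall W, P y W -> exists k, g k = W).
  move=> y.
  apply: enum_countable => //.
  by have [W PW _] := ax3 y setT opT I; exists W.
have /choice[s Hs] : forall t : T * set T * set T, exists W : set T,
   P t.1.1 t.1.2 -> P t.1.1 t.2 -> P t.1.1 W /\ W `<=` t.1.2 `&` t.2.
  move=> [[y U] V] /=.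
  case: (pselect (P y U /\ P y V)) => [[PU PV]|nP].
    by have [W PW WUV] := ax1 y U V PU PV; exists W.
  by exists setT => PU PV; case: nP.
pose D := fun y => fix F n := match n with 0 => e y 0 | n'.+1 => s (y, F n', e y n'.+1) end.
have PD : forall y n, P y (D y n).
  move=> y; elim=> [|n IH] /=; first by case: (He y).
  by case: (Hs (y, D y n, e y n.+1)) => //=; case: (He y).
have De : forall y n, D y n `<=` e y n.
  move=> y [|n] //= x /(proj2 (Hs (y, D y n, e y n.+1) (PD y n) (proj1 (He y) _))).
  by case.
have DS : forall y n, D y n.+1 `<=` D y n.
  move=> y n x /(proj2 (Hs (y, D y n, e y n.+1) (PD y n) (proj1 (He y) _))).
  by case.
exists D; split => //.
  move=> y n m; elim: m => [|m IH]; first by rewrite leqn0 => /eqP ->.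
  rewrite leq_eqVlt => /orP[/eqP -> //|/IH h].
  by move=> x /DS /h.
move=> y W /(proj2 (He y))[k <-]; exists k; exact: De.
Qed.

Lemma gfc_seq T (op : set (set T)) : op setT ->
  g_first_countable op -> sequential_sp op.
Proof.
move=> opT [P [wb cP]] U sU.
have [D [PD Ddec Dk]] := dec_base opT wb cP.
case: wb => ax1 ax2 ax3 ax4.
apply: ax4 => y Uy.
apply: contrapT => nW.
have hx : forall n, exists x, D y n x /\ ~ U x.
  move=> n; apply: contrapT => nx; apply: nW; exists (D y n) => // x Dx.
  by apply: contrapT => nUx; apply: nx; exists x.
have [x Hx] := choice hx.
have cx : seq_conv op x y.
  move=> V oV Vy; have [W PW WV] := ax3 y V oV Vy.
  have [k Dk'] := Dk y W PW.
  by exists k => n kn; apply/WV/Dk'/(Ddec y k n kn); case: (Hx n).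
have [N HN] := sU x y cx Uy.
by case: (Hx N) => _; apply; apply: HN.
Qed.
Section Viet.
Variable X : topologicalType.

Lemma basic_open (Us : seq (set X)) : (forall U, U \in Us -> open U) ->
  vietoris_open (vietoris_basic Us).
Proof. by move=> h B hB; exists Us; split. Qed.

Lemma basic1 (V : set X) (B : finsub X) : fs_set B `<=` V -> vietoris_basic [:: V] B.
Proof.
move=> BV; split => [x Bx|U]; first by exists V; rewrite ?mem_seq1 //; apply: BV.
rewrite mem_seq1 => /eqP ->; case: (fs_ne B) => x Bx; exists x; split => //; exact: BV.
Qed.

Lemma basic1E (V : set X) (B : finsub X) : vietoris_basic [:: V] B -> fs_set B `<=` V.
Proof. by case=> h _ x /h [U]; rewrite mem_seq1 => /eqP ->. Qed.

Hypothesis regX : regular_space X.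
Hypothesis hX : hausdorff_space X.

Lemma fin_closed (A : set X) : finite_set A -> closed A.
Proof. exact: (proj1 (@accessible_finite_set_closed X) (hausdorff_accessible hX)). Qed.

Lemma sep_lemma (u : nat -> finsub X) (A : finsub X) (H : set X) (y : X) :
  seq_conv (@vietoris_open X) u A -> (forall c, H c -> exists n, fs_set (u n) c) ->
  ~ fs_set A y -> ~ H y ->
  exists O, [/\ open O, O y & forall z, O z -> ~ H z /\ ~ fs_set A z].
Proof.
move=> cu Hu nAy nHy.
have cA : closed (fs_set A) := fin_closed (fs_fin A).
have nb : nbhs y (~` fs_set A).
  by apply: open_nbhs_nbhs; split => //; exact: closed_openC.
have [M nM cM] := regX nb.
pose V := ~` closure M.
have oV : open V by apply: closed_openC; exact: closed_closure.
have AV : fs_set A `<=` V by move=> a Aa /cM.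
have oB : vietoris_open (vietoris_basic [:: V]).
  by apply: basic_open => U; rewrite mem_seq1 => /eqP ->.
have [K HK] := cu _ oB (basic1 AV).
pose F := H `&` \bigcup_(n in `I_K) fs_set (u n).
have fF : finite_set F.
  apply: finite_setIr; apply: bigcup_finite; first exact: finite_II.
  move=> n _; exact: fs_fin.
exists (M° `&` ~` F); split.
- apply: openI; first exact: open_interior.
  by apply: closed_openC; apply: fin_closed.
- by split => //; case.
move=> z [Mz nFz]; split.
  move=> Hz; have [n un] := Hu z Hz.
  case: (leqP K n) => Kn.
    have := basic1E (HK n Kn) un; apply.
    by apply: subset_closure; apply: nbhs_singleton.
  by apply: nFz; split => //; exists n.
move=> Az; have : (~` fs_set A) z.
  by apply: cM; apply: subset_closure; apply: nbhs_singleton.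
by apply.
Qed.

Lemma ev_seq (T : eqType) (s : seq T) (Q : T -> nat -> Prop) :
  (forall x, x \in s -> exists N, forall n, (N <= n)%N -> Q x n) ->
  exists N, forall n, (N <= n)%N -> forall x, x \in s -> Q x n.
Proof.
elim: s => [|y s IH] h; first by exists 0%N.
have [N1 H1] := h y (mem_head _ _).
have [N2 H2] : exists N, forall n, (N <= n)%N -> forall x, x \in s -> Q x n.
  by apply: IH => x xs; apply: h; rewrite inE xs orbT.
exists (maxn N1 N2) => n; rewrite geq_max => /andP[h1 h2] x.
rewrite inE => /orP[/eqP ->|xs]; [exact: H1 | exact: H2].
Qed.

Lemma ev_fin (A : set X) (Q : X -> nat -> Prop) : finite_set A ->
  (forall x, A x -> exists N, forall n, (N <= n)%N -> Q x n) ->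
  exists N, forall n, (N <= n)%N -> forall x, A x -> Q x n.
Proof.
move=> /finite_seqP[s ->] h.
have [N HN] := ev_seq (Q := Q) h.
by exists N => n Nn x xs; apply: HN.
Qed.

Variables (P : X -> set (set X)) (D : X -> nat -> set X).
Hypothesis wbP : weak_base open P.
Hypothesis PD : forall y n, P y (D y n).
Hypothesis Ddec : forall y n m, (n <= m)%N -> D y m `<=` D y n.
Hypothesis Dk : forall y W, P y W -> exists k, D y k `<=` W.

Definition QA (A : finsub X) (m : nat) : set (finsub X) :=
  [set B | (forall b, fs_set B b -> exists2 a, fs_set A a & D a m b) /\
           (forall a, fs_set A a -> exists2 b, fs_set B b & D a m b)].

Lemma QA_dec A n m : (n <= m)%N -> QA A m `<=` QA A n.
Proof.
move=> nm B [h1 h2]; split.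
  by move=> b /h1 [a Aa Db]; exists a => //; apply: Ddec nm _ Db.
by move=> a /h2 [b Bb Db]; exists b => //; apply: Ddec nm _ Db.
Qed.

Lemma Dself y n : D y n y.
Proof. by case: wbP => _ ax2 _ _; apply: ax2. Qed.

Lemma QA_self A m : QA A m A.
Proof. by split => [b Ab|a Aa]; [exists b|exists a] => //; apply: Dself. Qed.

Lemma D_ev (U : set X) a : open U -> U a ->
  exists N, forall m, (N <= m)%N -> D a m `<=` U.
Proof.
case: wbP => _ _ ax3 _ oU Ua; have [W PW WU] := ax3 a U oU Ua.
have [k Hk] := Dk PW; exists k => m km x /(Ddec km) /Hk; exact: WU.
Qed.

Lemma QA_net (G : set (finsub X)) A : vietoris_open G -> G A ->
  exists m, QA A m `<=` G.
Proof.
move=> oG GA; have [Us [oUs [bA1 bA2] sG]] := oG A GA.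
have [N HN] : exists N, forall n, (N <= n)%N -> forall a, fs_set A a ->
    forall U, U \in Us -> U a -> D a n `<=` U.
  apply: ev_fin (fs_fin A) _ => a Aa.
  have [N HN] : exists N, forall n, (N <= n)%N -> forall U, U \in Us -> U a -> D a n `<=` U.
    apply: ev_seq => U Us'; case: (pselect (U a)) => [Ua|nUa].
      by have [N h] := D_ev (oUs U Us') Ua; exists N => n Nn _; apply: h.
    by exists 0%N => n _ Ua; case: nUa.
  by exists N => n Nn U Us' Ua; apply: HN.
exists N => B [h1 h2]; apply: sG; split.
  move=> b /h1 [a Aa Dab]; have [U Us' Ua] := bA1 a Aa.
  by exists U => //; apply: (HN N (leqnn _) a Aa U Us' Ua).
move=> U Us'; have [a [Aa Ua]] := bA2 U Us'.
have [b Bb Dab] := h2 a Aa; exists b; split => //.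
exact: (HN N (leqnn _) a Aa U Us' Ua).
Qed.

Lemma basic_open1 (V : set X) : open V -> vietoris_open (vietoris_basic [:: V]).
Proof. by move=> oV; apply: basic_open => U; rewrite mem_seq1 => /eqP ->. Qed.

Lemma part_a u A m : seq_conv (@vietoris_open X) u A ->
  exists N, forall n, (N <= n)%N -> forall b, fs_set (u n) b ->
    exists2 a, fs_set A a & D a m b.
Proof.
move=> cu.
pose Du b := exists2 a, fs_set A a & D a m b.
pose H c := exists n, fs_set (u n) c /\ ~ Du c.
have oG : open (~` H).
  case: wbP => _ _ ax3 ax4; apply: ax4 => y nHy.
  case: (pselect (fs_set A y)) => Ay.
    by exists (D y m) => // z Dz [n [_ nD]]; apply: nD; exists y.
  have Hu : forall c, H c -> exists n, fs_set (u n) c by move=> c [n [h _]]; exists n.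
  have [O [oO Oy HO]] := sep_lemma cu Hu Ay nHy.
  have [W PW WO] := ax3 y O oO Oy; exists W => // z /WO /HO [].
  done.
have AG : fs_set A `<=` ~` H.
  by move=> a Aa [n [_ nD]]; apply: nD; exists a => //; exact: Dself.
have [N HN] := cu _ (basic_open1 oG) (basic1 AG).
exists N => n Nn b ub; apply: contrapT => nD.
by apply: (basic1E (HN n Nn) ub); exists n.
Qed.

Lemma part_b u A m a : seq_conv (@vietoris_open X) u A -> fs_set A a ->
  (forall z, D a m z -> fs_set A z -> z = a) ->
  exists N, forall n, (N <= n)%N -> exists2 b, fs_set (u n) b & D a m b.
Proof.
move=> cu Aa Dsep.
pose bad n := forall b, fs_set (u n) b -> ~ D a m b.
pose H c := exists n, bad n /\ fs_set (u n) c.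
pose C := H `|` [set z | fs_set A z /\ z <> a].
have oG : open (~` C).
  case: wbP => _ _ ax3 ax4; apply: ax4 => y nCy.
  case: (pselect (y = a)) => [->|ya].
    exists (D a m) => // z Dz [[n [bn uz]]|[Az za]]; first exact: bn z uz Dz.
    exact: za (Dsep z Dz Az).
  have Ay : ~ fs_set A y by move=> Ay; apply: nCy; right.
  have nHy : ~ H y by move=> Hy; apply: nCy; left.
  have Hu : forall c, H c -> exists n, fs_set (u n) c by move=> c [n [_ h]]; exists n.
  have [O [oO Oy HO]] := sep_lemma cu Hu Ay nHy.
  have [W PW WO] := ax3 y O oO Oy; exists W => // z /WO /HO [h1 h2] [//|[]//].
have Ga : (~` C) a.
  move=> [[n [bn ua]]|[_ //]].
  exact: bn a ua (Dself a m).
have oB : vietoris_open (vietoris_basic [:: setT; ~` C]).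
  apply: basic_open => U; rewrite !inE => /orP[/eqP ->|/eqP ->] //.
  exact: openT.
have AB : vietoris_basic [:: setT; ~` C] A.
  split => [x Ax|U]; first by exists setT; rewrite ?inE ?eqxx.
  rewrite !inE => /orP[/eqP ->|/eqP ->]; last by exists a.
  by exists a.
have [N HN] := cu _ oB AB.
have mG : (~` C) \in [:: setT; ~` C] by rewrite !inE eqxx orbT.
exists N => n Nn; have [x [ux Gx]] := (HN n Nn).2 (~` C) mG.
apply: contrapT => nb; apply: Gx; left; exists n; split => // b ub Db.
by apply: nb; exists b.
Qed.

Lemma QA_seq u A m : seq_conv (@vietoris_open X) u A ->
  exists N, forall n, (N <= n)%N -> QA A m (u n).
Proof.
move=> cu.
have [N0 H0] : exists N0, forall n, (N0 <= n)%N -> forall a, fs_set A a ->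
    forall z, D a n z -> fs_set A z -> z = a.
  apply: ev_fin (fs_fin A) _ => a Aa.
  have oU : open (~` [set z | fs_set A z /\ z <> a]).
    apply: closed_openC; apply: fin_closed.
    by apply: sub_finite_set (fs_fin A) => z [].
  have [N HN] := D_ev oU (fun h => h.2 erefl).
  exists N => n Nn z Dz Az; apply: contrapT => za.
  exact: (HN n Nn z Dz).
pose m' := maxn m N0.
have [Na HA] := part_a m' cu.
have [Nb HB] : exists N, forall n, (N <= n)%N -> forall a, fs_set A a ->
    exists2 b, fs_set (u n) b & D a m' b.
  apply: ev_fin (fs_fin A) _ => a Aa; apply: (part_b cu Aa).
  exact: H0 _ (leq_maxr _ _) a Aa.
exists (maxn Na Nb) => n; rewrite geq_max => /andP[h1 h2].
apply: (QA_dec (leq_maxl m N0)); split; [exact: HA | exact: HB].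
Qed.
End Viet.

Theorem theorem4p12 (X : topologicalType) :
  regular_space X -> hausdorff_space X -> g_first_countable (@open X) ->
  (g_first_countable (@vietoris_open X) <-> sequential_sp (@vietoris_open X)).
Proof.
move=> regX hX [P [wbP cP]].
have oT : vietoris_open (@setT (finsub X)).
  by move=> A _; exists [:: setT]; split; [move=> U; rewrite mem_seq1 => /eqP ->; exact: openT | exact: basic1 | ].
split; first exact: gfc_seq.
move=> sF.
have [D [PD Ddec Dk]] := dec_base (@openT X) wbP cP.
exists (fun A => QA D A @` setT); split; last first.
  by move=> A; apply: sub_countable (card_image_le _ _) _.
split.
- move=> A U V [m _ <-] [m' _ <-]; exists (QA D A (maxn m m')); first by exists (maxn m m').
  move=> B h; split; [exact: (QA_dec Ddec (leq_maxl _ _)) _ h | exact: (QA_dec Ddec (leq_maxr _ _)) _ h].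
- by move=> A W [m _ <-]; apply: (QA_self wbP PD).
- move=> A G oG GA; have [m Hm] := QA_net wbP Ddec Dk oG GA.
  by exists (QA D A m) => //; exists m.
- move=> G HG; apply: sF => u A cu GA.
  have [_ [m _ <-] sub] := HG A GA.
  have [N HN] := QA_seq regX hX wbP PD Ddec Dk m cu.
  by exists N => n Nn; apply: sub; apply: HN.
Qed.
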